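(* Let $n\geq 4$. The wheel $W_n$ is not strong cop-win (i.e. not strong $1$-cop-win), but it is strong 2-cop-win, and $\lim_{m\to\infty}\mathrm{capt}_2(W_n,m)=n-3$.
   Context: The wheel $W_n$ ($n\geq 4$) is the cycle $C_{n-1}$ together with one additional vertex adjacent to all cycle vertices. All graphs are reflexive (a player may stay in place). The game of $k$ cops and $m$ robbers on $G$: in round 0 the cops first choose starting vertices, then the robbers choose theirs. In each round $i\geq 1$, all $k$ cops move (each to an adjacent vertex or staying), then all $m$ robbers move likewise. Several players may occupy the same vertex. Whenever a cop and some robbers occupy the same vertex, those robbers are captured and take no further part in the game. Both sides have full information. The cops win if all robbers are captured after finitely many rounds. $G$ is $k$-cop-win if $k$ cops can always win against one robber. For a $k$-cop-win graph $G$, $\mathrm{capt}_k(G,m)$ is the index of the round in which the last robber is captured when $k$ cops play to minimize this index and $m$ robbers play to maximize it. $G$ is strong $k$-cop-win if $\lim_{m\to\infty}\mathrm{capt}_k(G,m)$ exists (and is finite). *)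

(* Defs.v *)
From mathcomp Require Import all_boot.
Set Implicit Arguments. Unset Strict Implicit. Unset Printing Implicit Defensive.

Section Game.
Variables (V : finType) (adj : rel V).

(* Robber status: Some v = robber at v, still in the game; None = captured. *)

Definition capture (k m : nat) (c : {ffun 'I_k -> V}) (r : {ffun 'I_m -> option V})
  : {ffun 'I_m -> option V} :=
  [ffun j => if r j is Some v then (if [exists i, c i == v] then None else Some v)
             else None].

Definition all_captured (m : nat) (r : {ffun 'I_m -> option V}) : Prop :=
  forall j, r j = None.

(* cops_win_within k m t c r : in the position (c, r) reached at the end of some
   round, the cops can force that all robbers are captured within at most t further
   rounds (a round = all cops move, captures, all remaining robbers move, captures). *)
Fixpoint cops_win_within (k m t : nat) (c : {ffun 'I_k -> V})
  (r : {ffun 'I_m -> option V}) : Prop :=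
  match t with
  | 0 => all_captured r
  | t'.+1 =>
      all_captured r \/
      exists c' : {ffun 'I_k -> V},
        (forall i, adj (c i) (c' i)) /\
        forall rm : {ffun 'I_m -> V},
          (forall j v, capture c' r j = Some v -> adj v (rm j)) ->
          cops_win_within t' c'
            (capture c' [ffun j => omap (fun _ => rm j) (capture c' r j)])
  end.

(* The k cops can capture all m robbers by the end of round t (round 0: cops
   place, then robbers place). *)
Definition capt_within (k m t : nat) : Prop :=
  exists c0 : {ffun 'I_k -> V},
    forall r0 : {ffun 'I_m -> V},
      cops_win_within t c0 (capture c0 [ffun j => Some (r0 j)]).

Definition is_capt (k m t : nat) : Prop :=
  capt_within k m t /\ forall t', t' < t -> ~ capt_within k m t'.

Definition k_cop_win (k : nat) : Prop := exists t, capt_within k 1 t.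

(* lim_{m -> oo} capt_k(G, m) = L  (integer valued, so eventually constant) *)
Definition capt_limit (k L : nat) : Prop :=
  exists M, forall m, M <= m -> is_capt k m L.

Definition strong_k_cop_win (k : nat) : Prop :=
  k_cop_win k /\ exists L, capt_limit k L.

End Game.

(* The wheel W_n on vertices 'I_n: vertex 0 is the hub, vertices 1..n-1 form the
   cycle C_{n-1} (i ~ i+1 for 1 <= i <= n-2, and 1 ~ n-1).  Reflexive. *)
Definition wheel_adj (n : nat) : rel 'I_n :=
  fun u v =>
    [|| u == v, val u == 0, val v == 0 |
     [&& 0 < val u, 0 < val v &
      [|| val v == (val u).+1, val u == (val v).+1,
          (val u == 1) && (val v == n.-1) | (val v == 1) && (val u == n.-1)]]].
Arguments wheel_adj n : clear implicits.

(* Main.v *)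
Require Import Defs.
From mathcomp Require Import all_boot.
From mathcomp Require Import zify.
From Stdlib Require Import Classical.

Lemma up_ind (R : nat -> Prop) a h :
  R a -> (forall v, a <= v -> v < h -> R v -> R v.+1) -> forall v, a <= v <= h -> R v.
Proof.
move=> Ha Hs v /andP [H1 H2].
have: forall d, a + d <= h -> R (a + d).
  elim=> [|d IH] Hd; first by rewrite addn0.
  rewrite addnS; apply: Hs; [lia|lia|apply: IH; lia].
move/(_ (v - a)); rewrite subnKC //; apply; lia.
Qed.

Lemma down_ind (R : nat -> Prop) a h :
  R a -> (forall v, h < v -> v <= a -> R v -> R v.-1) -> forall v, h <= v <= a -> R v.
Proof.
move=> Ha Hs v /andP [H1 H2].
have: forall d, h + d <= a -> R (a - d).
  elim=> [|d IH] Hd; first by rewrite subn0.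
  have -> : a - d.+1 = (a - d).-1 by lia.
  apply: Hs; [lia|lia|apply: IH; lia].
move/(_ (a - v)); have -> : a - (a - v) = v by lia. apply; lia.
Qed.

Definition cycadj p r w := w = r.+1 \/ r = w.+1 \/ (r = 1 /\ w = p) \/ (w = 1 /\ r = p).

Lemma cycle_lemma p (Rn : nat -> Prop) r0 x b :
  Rn r0 -> (forall v, Rn v -> 1 <= v <= p) -> 1 <= x <= p -> ~ Rn x -> x <> b -> ~ Rn b ->
  exists r w, Rn r /\ 1 <= w <= p /\ ~ Rn w /\ w <> b /\ cycadj p r w.
Proof.
move=> Hr0 HR Hx Hnx Hxb Hnb.
apply: NNPP => Hno.
have H : forall r w, Rn r -> 1 <= w <= p -> w <> b -> cycadj p r w -> Rn w.
  move=> r w Hr Hw Hwb Hc; apply: NNPP => Hnw; apply: Hno; exists r, w; tauto.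
have Hr0' := HR _ Hr0.
apply: Hnx.
have [Hb|Hb] := ltnP r0 b.
-
  have Up : forall v, r0 <= v <= minn (b.-1) p -> Rn v.
    apply: up_ind => // v H1 H2 Hv; apply: (H v _ Hv); rewrite /cycadj; lia.
  have Dn : forall v, 1 <= v <= r0 -> Rn v.
    apply: down_ind => // v H1 H2 Hv; apply: (H v _ Hv); rewrite /cycadj; lia.
  have [Hbp|Hbp] := leqP b p; last first.
    have [Hx1|Hx1] := leqP x r0; first by apply: Dn; lia.
    by apply: Up; lia.
  have [Hpb|Hpb] := eqVneq p b.
    have [Hx1|Hx1] := leqP x r0; first by apply: Dn; lia.
    by apply: Up; lia.
  have Rp : Rn p by apply: (H 1); [apply: Dn; lia|lia|by apply/eqP|rewrite /cycadj; lia].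
  have Tp : forall v, b.+1 <= v <= p -> Rn v.
    apply: down_ind => // v H1 H2 Hv; apply: (H v _ Hv); rewrite /cycadj; lia.
  have [Hx1|Hx1] := leqP x r0; first by apply: Dn; lia.
  have [Hx2|Hx2] := leqP b x; first by apply: Tp; lia.
  by apply: Up; lia.
-
  have Hb' : b < r0.
    by rewrite ltn_neqAle Hb andbT; apply/eqP => E; subst b.
  have Up : forall v, r0 <= v <= p -> Rn v.
    apply: up_ind => // v H1 H2 Hv; apply: (H v _ Hv); rewrite /cycadj; lia.
  have Dn : forall v, b.+1 <= v <= r0 -> Rn v.
    apply: down_ind => // v H1 H2 Hv; apply: (H v _ Hv); rewrite /cycadj; lia.
  have [Hx1|Hx1] := leqP r0 x; first by apply: Up; lia.
  have [Hx2|Hx2] := ltnP b x; first by apply: Dn; lia.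
  have R1 : Rn 1 by apply: (H p); [apply: Up; lia|lia|lia|rewrite /cycadj; lia].
  have Lo : forall v, 1 <= v <= b.-1 -> Rn v.
    apply: up_ind => // v H1 H2 Hv; apply: (H v _ Hv); rewrite /cycadj; lia.
  by apply: Lo; lia.
Qed.

Set Implicit Arguments. Unset Strict Implicit. Unset Printing Implicit Defensive.

Section Robbers.
Variables (V : finType) (adj : rel V).
Hypothesis adjr : forall v, adj v v.

Definition cset k (c : {ffun 'I_k -> V}) : {set V} := [set c i | i : 'I_k].

Lemma in_cset k (c : {ffun 'I_k -> V}) v : (v \in cset c) = [exists i, c i == v].
Proof.
apply/imsetP/existsP => [[i _ ->]|[i /eqP <-]]; by exists i.
Qed.

Definition step k (c : {ffun 'I_k -> V}) (S : {set V}) : {set V} :=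
  [set w | (w \notin cset c) &&
     [exists s, [&& s \in S, s \notin cset c & adj s w]]].

Lemma capture_Some k m (c : {ffun 'I_k -> V}) (r : {ffun 'I_m -> option V}) j v :
  capture c r j = Some v <-> r j = Some v /\ v \notin cset c.
Proof.
rewrite /capture ffunE in_cset; case: (r j) => [u|]; last by split => // -[].
case: ifP => H; split.
- by [].
- by case=> [[<-]]; rewrite H.
- by case=> <-; rewrite H.
- by case => [[<-]].
Qed.

Variables (m T : nat) (dig : 'I_m -> nat -> V).

Definition rich (i : nat) (r : {ffun 'I_m -> option V}) (S : {set V}) :=
  forall w, w \in S -> forall g : nat -> V,
    exists j, r j = Some w /\ forall l, i <= l -> l < T -> dig j l = g l.

Variables (k : nat) (P : nat -> {set V} -> Prop).
Hypothesis Pstep : forall t S (c : {ffun 'I_k -> V}), P t.+1 S -> P t (step c S).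
Hypothesis Pne : forall t S, P t S -> exists w, w \in S.

Lemma rich_not_captured i r S t : rich i r S -> P t S -> ~ all_captured r.
Proof.
move=> Hr /Pne [w Hw] Hall.
have [j [Hj _]] := Hr w Hw (fun _ => w).
by rewrite Hall in Hj.
Qed.

Lemma survive t : forall i (c : {ffun 'I_k -> V}) r S,
  i + t <= T -> rich i r S -> P t S -> ~ cops_win_within adj t c r.
Proof.
elim: t => [|t IH] i c r S Hi Hr HP /=.
  exact: (rich_not_captured Hr HP).
case; first exact: (rich_not_captured Hr HP).
move=> [c' [Hadj Hwin]].
pose rm := [ffun j => match r j with
   | Some s => if adj s (dig j i) && (dig j i \notin cset c') then dig j i else s
   | None => dig j i end].
have Hrm : forall j v, capture c' r j = Some v -> adj v (rm j).
  move=> j v /capture_Some [Hj _]; rewrite /rm ffunE Hj.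
  by case: ifP => [/andP []|]. 
apply: (IH i.+1 c' _ (step c' S) _ _ (Pstep c' HP) (Hwin rm Hrm)); first lia.
move=> w; rewrite inE => /andP [Hwc /existsP [s /and3P [Hs Hsc Hsw]]] g.
have [j [Hj Hd]] := Hr s Hs (fun l => if l == i then w else g l).
exists j; split.
  apply/capture_Some; split => //.
  rewrite ffunE.
  have -> : capture c' r j = Some s by apply/capture_Some.
  rewrite /= /rm ffunE Hj Hd ?eqxx //; last lia.
  by rewrite Hsw Hwc.
move=> l Hl1 Hl2; rewrite Hd; last lia; last lia.
by have -> : (l == i) = false by apply/eqP; lia.
Qed.

End Robbers.

Section NotCapt.
Variables (V : finType) (adj : rel V).
Hypothesis adjr : forall v, adj v v.
Variables (v0 : V) (k m t : nat) (P : nat -> {set V} -> Prop).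
Hypothesis Pstep : forall t S (c : {ffun 'I_k -> V}), P t.+1 S -> P t (step adj c S).
Hypothesis Pne : forall t S, P t S -> exists w, w \in S.
Hypothesis Pinit : forall c : {ffun 'I_k -> V}, P t (~: cset c).
Hypothesis Hm : #|V| ^ t.+1 <= m.

Lemma not_capt : ~ capt_within adj k m t.
Proof.
pose F := {ffun 'I_t.+1 -> V}.
pose f0 : F := [ffun _ => v0].
pose dig (j : 'I_m) (l : nat) : V :=
  if insub l is Some o then (nth f0 (enum F) j : F) o else v0.
have Hsurj : forall g : nat -> V, exists j : 'I_m, forall l, l < t.+1 -> dig j l = g l.
  move=> g; pose f : F := [ffun o => g (val o)].
  have Hi : index f (enum F) < m.
    apply: leq_trans Hm.
    have E : #|F| = #|V| ^ t.+1 by rewrite card_ffun card_ord.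
    by rewrite -E cardE index_mem mem_enum.
  exists (Ordinal Hi) => l Hl; rewrite /dig /= nth_index ?mem_enum //.
  by rewrite insubT /= ffunE.
case=> c0 Hc0.
pose r0 : {ffun 'I_m -> V} := [ffun j => dig j 0].
apply: (survive adjr (T := t.+1) (dig := dig) (P := P) Pstep Pne (i := 1)
         (S := ~: cset c0) _ _ (Pinit c0) (Hc0 r0)) => //.
move=> w; rewrite inE => Hw g.
have [j Hj] := Hsurj (fun l => if l == 0 then w else g l).
exists j; split.
  apply/capture_Some; split => //.
  by rewrite ffunE /r0 ffunE Hj.
move=> l Hl1 Hl2; rewrite Hj //.
by case: l Hl1 {Hl2}.
Qed.
End NotCapt.

Section Wheel.
Variable p : nat.
Hypothesis hp : 3 <= p.
Notation V := 'I_p.+1.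
Notation adj := (wheel_adj p.+1).

Lemma adjE (u v : V) : adj u v =
  [|| val u == val v, val u == 0, val v == 0 |
     [&& 0 < val u, 0 < val v &
      [|| val v == (val u).+1, val u == (val v).+1,
          (val u == 1) && (val v == p) | (val v == 1) && (val u == p)]]].
Proof. by []. Qed.

Lemma adj_refl (v : V) : adj v v.
Proof. by rewrite adjE eqxx. Qed.

Definition hub : V := ord0.

Lemma key (S C : {set V}) r0 x :
  C \subset S -> r0 \in S :\: C -> x \notin S -> #|C| <= 2 ->
  exists w, w \notin S /\ exists r, r \in S :\: C /\ adj r w.
Proof.
move=> HCS Hr0 Hx HC.
have [Hh|Hh] := boolP (hub \in S :\: C).
  by exists x; split => //; exists hub; split => //; rewrite adjE eqxx orbT.
have [HhS|HhS] := boolP (hub \in S); last first.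
  by exists hub; split => //; exists r0; split => //; rewrite adjE eqxx !orbT.
have HhC : hub \in C by move: Hh; rewrite inE HhS andbT negbK.
have [b [HbC HCb]] : exists b, b \in C /\ C \subset [set hub; b].
  have [Hs|Hs] := boolP (C \subset [set hub]).
    by exists hub; split => //; apply: subset_trans Hs _; apply/subsetP => y; rewrite !inE => ->.
  have [b Hb1 Hb2] := subsetPn Hs.
  exists b; split => //.
  have Hsub : [set hub; b] \subset C by apply/subsetP => y; rewrite !inE => /orP [] /eqP ->.
  have : [set hub; b] == C.
    rewrite eqEcard Hsub cards2 /=.
    by move: Hb2; rewrite inE eq_sym => ->.
  by move/eqP ->.
have HxC : x \notin C by apply: contra Hx; apply: (subsetP HCS).
pose Rn v := exists o : V, val o = v /\ o \in S :\: C.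
have HRn : forall v, Rn v -> 1 <= v <= p.
  move=> v [o [<- Ho]]; have : o != hub by apply: contraTneq Ho => ->; rewrite inE HhC.
  move: (ltn_ord o); case: o {Ho} => [[|o] Ho] //= _ _; lia.
have Hxn : x != hub by apply: contraNneq Hx => ->.
have Hx1 : 1 <= val x <= p.
  move: Hxn (ltn_ord x); case: x {Hx HxC} => [[|xx] Hxx] //= _; lia.
have Hnx : ~ Rn (val x).
  by move=> [o [/val_inj -> Ho]]; move: Ho; rewrite inE (negbTE Hx) andbF.
have Hxb : val x <> val b by move/val_inj => E; move: HxC; rewrite E HbC.
have Hnb : ~ Rn (val b) by move=> [o [/val_inj -> Ho]]; move: Ho; rewrite inE HbC.
have [r [w [[ro [Hro HroR]] [Hw [Hnw [Hwb Hc]]]]]] :=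
  cycle_lemma p Rn (val r0) (val x) (val b) (ex_intro _ r0 (conj erefl Hr0))
    HRn Hx1 Hnx Hxb Hnb.
have Hwp : w < p.+1 by lia.
pose wo : V := Ordinal Hwp.
exists wo; split.
  apply/negP => HwS; apply: Hnw; exists wo; split => //.
  rewrite inE HwS andbT; apply/negP => /(subsetP HCb); rewrite !inE => /orP [] /eqP E.
    by move: E => /(congr1 val) /= E; lia.
  by apply: Hwb; rewrite -E.
exists ro; split => //.
have := HRn _ (ex_intro _ ro (conj Hro HroR)).
rewrite adjE Hro /=; move: Hc; rewrite /cycadj; lia.
Qed.

Lemma card_step k (c : {ffun 'I_k -> V}) (S : {set V}) x :
  #|cset c| <= 2 -> 3 <= #|S| -> x \notin S ->
  #|S| + 1 <= #|step adj c S| + #|cset c|.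
Proof.
move=> HC HS Hx.
set C := cset c.
have HC2 : #|C| <= 2 := HC.
have HR : S :\: C \subset step adj c S.
  apply/subsetP => s; rewrite !inE => /andP [HsC HsS].
  by rewrite HsC /=; apply/existsP; exists s; rewrite HsS HsC adj_refl.
have HRc : #|S :\: C| = #|S| - #|S :&: C| by rewrite cardsD.
have [HCS|HCS] := boolP (C \subset S).
  have HI : S :&: C = C by apply/setIidPr.
  rewrite HI in HRc.
  have : 0 < #|S :\: C| by rewrite HRc subn_gt0 (leq_ltn_trans HC2 HS).
  rewrite card_gt0 => /set0Pn [r0 Hr0].
  have [w [HwS [r [Hr Hrw]]]] := key HCS Hr0 Hx HC.
  have HwR : w \notin S :\: C by rewrite inE (negbTE HwS) andbF.
  have HwC : w \notin C by apply: contra HwS; apply: (subsetP HCS).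
  have Hsub : w |: (S :\: C) \subset step adj c S.
    rewrite subUset HR andbT sub1set inE HwC /=.
    apply/existsP; exists r; move: Hr; rewrite inE => /andP [-> ->] /=; by [].
  have := subset_leq_card Hsub; rewrite cardsU1 HwR.
  have HCle : #|C| <= #|S| by apply: subset_leq_card.
  rewrite HRc => Hst.
  by rewrite addn1 -(subnK HCle) -addSn leq_add2r.
have : #|S :&: C| < #|C|.
  rewrite -(cardsID S C) [S :&: C]setIC -[X in X < _]addn0 ltn_add2l.
  by rewrite card_gt0; apply/set0Pn; have [y Hy1 Hy2] := subsetPn HCS; exists y; rewrite inE Hy1 Hy2.
move=> Hlt; have Hsub := subset_leq_card HR; rewrite HRc in Hsub.
have Hba : #|S :&: C| <= #|S| by apply: subset_leq_card; apply: subsetIl.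
move: Hlt Hsub Hba.
set a := #|S|; set b := #|S :&: C|; set cc := #|C|; set st := #|step adj c S|.
lia.
Qed.

Definition copA (i : nat) : nat := if odd i then 2 else 0.
Definition copB (i : nat) : nat := if i == 0 then 1 else p.+1 - i.
Definition cop (i : nat) : {ffun 'I_2 -> V} :=
  [ffun o => if val o == 0 then inord (copA i) else inord (copB i)].
Definition inS (i v : nat) : bool :=
  (3 <= v <= p - i) || ((i < p - 2) && (if odd i then v == 0 else v == 2)).

Lemma val_cop i (o : 'I_2) : val (cop i o) = if val o == 0 then copA i else copB i.
Proof.
rewrite ffunE /=; case: ifP => _; rewrite inordK //.
  by rewrite /copA; case: (odd i); lia.
by rewrite /copB; case: eqP; lia.
Qed.

Lemma notin_cop i (v : V) : v \notin cset (cop i) ->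
  val v != copA i /\ val v != copB i.
Proof.
move=> H; split; apply: contra H => /eqP E; apply/imsetP.
  by exists ord0 => //; apply: val_inj; rewrite val_cop.
by exists (@Ordinal 2 1 isT) => //; apply: val_inj; rewrite val_cop.
Qed.

Lemma inS_step i t a b : i + t.+1 = p - 2 -> inS i a ->
  a != copA i.+1 -> a != copB i.+1 -> b != copA i.+1 -> b != copB i.+1 ->
  a <= p -> b <= p ->
  [|| a == b, a == 0, b == 0 |
     [&& 0 < a, 0 < b &
      [|| b == a.+1, a == b.+1, (a == 1) && (b == p) | (b == 1) && (a == p)]]] ->
  inS i.+1 b.
Proof.
rewrite /inS /copA /copB /=.
case: (odd i) => /=; lia.
Qed.

Lemma up m t : forall i (r : {ffun 'I_m -> option V}), i + t = p - 2 ->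
  (forall j v, r j = Some v -> inS i (val v)) -> cops_win_within adj t (cop i) r.
Proof.
elim: t => [|t IH] i r Hi Hr /=.
  move=> j; case E: (r j) => [v|] //.
  by move: (Hr j v E); rewrite /inS; lia.
right; exists (cop i.+1); split.
  move=> o; rewrite adjE !val_cop /copA /copB /=.
  by case: (odd i); case: (i =P 0); case: o => [[|[|o]] Ho] //=; lia.
move=> rm Hrm; apply: IH; first lia.
move=> j w /capture_Some [Hj Hw].
move: Hj; rewrite ffunE.
case E: (capture (cop i.+1) r j) => [v|] //= [Hvw].
have Hadj := Hrm j v E; rewrite Hvw in Hadj.
move: E => /capture_Some [Hrj Hv].
have Hinv := Hr j v Hrj.
have [Hv1 Hv2] := notin_cop Hv.
have [Hw1 Hw2] := notin_cop Hw.
move: Hadj; rewrite adjE => Hadj.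
apply: (inS_step (t := t) (a := val v) (b := val w)) => //.
  by rewrite -ltnS; exact: ltn_ord.
by rewrite -ltnS; exact: ltn_ord.
Qed.

Lemma capt_up m : capt_within adj 2 m (p - 2).
Proof.
exists (cop 0) => r0; apply: up => //.
move=> j v /capture_Some [_ Hv]; have [Hv1 Hv2] := notin_cop Hv.
have Hvp : val v <= p by rewrite -ltnS; exact: ltn_ord.
move: Hv1 Hv2 Hvp; rewrite /inS /copA /copB /=; lia.
Qed.

End Wheel.

Lemma step_props p (hp : 3 <= p) k (c : {ffun 'I_k.+1 -> 'I_p.+1}) (S : {set 'I_p.+1}) x :
  k <= 1 -> 3 <= #|S| -> x \notin S ->
  #|S| + 1 <= #|step (wheel_adj p.+1) c S| + k.+1 /\
  exists y, y \notin step (wheel_adj p.+1) c S.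
Proof.
move=> Hk HS Hx.
have Hc : #|cset c| <= k.+1.
  by apply: leq_trans (leq_imset_card _ _) _; rewrite card_ord.
have Hc2 : #|cset c| <= 2 by apply: leq_trans Hc _.
split.
  have := card_step hp Hc2 HS Hx.
  move: Hc; set a := #|cset c|; set b := #|S|; set d := #|step _ _ _|; lia.
exists (c ord0); rewrite inE negb_and negbK; apply/orP; left.
by apply/imsetP; exists ord0.
Qed.

Unset Implicit Arguments.

Theorem mainTheorem16 (n : nat) (hn : 4 <= n) :
  ~ strong_k_cop_win (wheel_adj n) 1 /\
  strong_k_cop_win (wheel_adj n) 2 /\
  capt_limit (wheel_adj n) 2 (n - 3).
Proof.
case: n hn => [//|p] hp.
have E : p.+1 - 3 = p - 2 by lia.
rewrite E.
have Hinit : forall k (c : {ffun 'I_k.+1 -> 'I_p.+1}),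
    k <= 1 -> p.+1 - k.+1 <= #|~: cset c| /\ exists y, y \notin ~: cset c.
  move=> k c Hk; split.
    rewrite cardsCs setCK card_ord.
    have : #|cset c| <= k.+1 by apply: leq_trans (leq_imset_card _ _) _; rewrite card_ord.
    set a := #|cset c|; lia.
  by exists (c ord0); rewrite inE negbK; apply/imsetP; exists ord0.
have Hlim : capt_limit (wheel_adj p.+1) 2 (p - 2).
  exists (#|'I_p.+1| ^ (p - 2)) => m Hm; split; first exact: capt_up.
  move=> t Ht.
  pose P (t : nat) (S : {set 'I_p.+1}) := t + 2 <= #|S| /\ exists x, x \notin S.
  apply: (@not_capt _ _ (@adj_refl p) ord0 2 m t P).
  - move=> t0 S c [HS [x Hx]].
    have H3 : 3 <= #|S| by move: HS; set a := #|S|; lia.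
    have [H1 H2] := step_props hp c (k := 1) isT H3 Hx.
    split => //; move: H1 HS; set a := #|S|; set b := #|step _ _ _|; lia.
  - move=> t0 S [HS _]; apply/set0Pn; rewrite -card_gt0; apply: leq_trans HS; lia.
  - move=> c; have [H1 H2] := Hinit 1 c isT; split => //.
    move: H1; rewrite card_ord in Hm *; set a := #|~: cset c|; lia.
  - apply: leq_trans Hm; rewrite card_ord; apply: leq_pexp2l => //; lia.
split.
  case=> _ [L [M HM]].
  pose m := maxn M (#|'I_p.+1| ^ L.+1).
  have [Hc _] := HM m (leq_maxl _ _).
  pose P (t : nat) (S : {set 'I_p.+1}) := 3 <= #|S| /\ exists x, x \notin S.
  apply: (@not_capt _ _ (@adj_refl p) ord0 1 m L P _ _ _ _ Hc).
  - move=> t0 S c [HS [x Hx]].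
    have [H1 H2] := step_props hp c (k := 0) isT HS Hx.
    split => //; move: H1 HS; set a := #|S|; set b := #|step _ _ _|; lia.
  - move=> t0 S [HS _]; apply/set0Pn; rewrite -card_gt0; apply: leq_trans HS; lia.
  - move=> c; have [H1 H2] := Hinit 0 c isT; split => //.
    move: H1; set a := #|~: cset c|; lia.
  - exact: leq_maxr.
split => //; split; last by exists (p - 2).
by exists (p - 2); apply: capt_up.
Qed.
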